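(* Let $\mathcal C$ be a decomposition finite category and $\mathscr B=\mathbb Z[\mathrm{Mor}(\mathcal C)]$ with coproduct $\Delta(\phi)=\sum_{\phi=\phi_1\circ\phi_0}\phi_0\otimes\phi_1$. Let $\mathcal C_\sim\subset\mathscr B$ be the subgroup spanned by all $f-g$ with $f\sim g$. Then $\Delta(\mathcal C_\sim)\subset\mathscr B\otimes\mathcal C_\sim+\mathcal C_\sim\otimes\mathscr B$, so $\Delta$ descends to a coassociative coproduct on $\mathscr B/\mathcal C_\sim$. Furthermore, after extending scalars to a commutative ring $R$ in which $|\mathrm{Iso}(X)|\,|\mathrm{Aut}(X)|$ is invertible for every object $X$ (e.g. $R=\mathbb Q$), the map $\bar\epsilon$ on $R[\mathrm{Mor}(\mathcal C)]/\mathcal C_\sim$ defined on classes of morphisms by $\bar\epsilon([f])=\frac{1}{|\mathrm{Iso}(X)|\,|\mathrm{Aut}(X)|}$ if $[f]=[\mathrm{id}_X]$ and $\bar\epsilon([f])=0$ otherwise, is a two-sided counit.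
   Context: A category is decomposition finite if every morphism has only finitely many factorizations $\phi=\phi_1\circ\phi_0$ (then $\mathrm{Aut}(X)$ and the set $\mathrm{Iso}(X)$ of objects isomorphic to $X$ are finite). For morphisms $f\colon X\to Y$ and $g\colon X'\to Y'$, $f\sim g$ means there are isomorphisms $\sigma\colon X\to X'$ and $\sigma'\colon Y\to Y'$ with $\sigma'\circ f=g\circ\sigma$; $[f]$ denotes the class of $f$ in $\mathscr B/\mathcal C_\sim$. Note $f\sim\mathrm{id}_X$ iff $f$ is an isomorphism between objects isomorphic to $X$. *)

(* Defs.v *)
From HB Require Import structures.
From mathcomp Require Import all_boot all_order all_algebra.
From Stdlib Require Import ClassicalEpsilon.
Set Implicit Arguments. Unset Strict Implicit. Unset Printing Implicit Defensive.
Import Order.TTheory GRing.Theory Num.Theory.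
Local Open Scope ring_scope.

(* A category presented by a type of objects, a (global) type of morphisms,
   domain/codomain maps, identities and composition.  [comp g f] is g ∘ f and
   is meaningful when [cod f = dom g]. *)
Record category := Category {
  Obj : Type;
  Mor : Type;
  dom : Mor -> Obj;
  cod : Mor -> Obj;
  idm : Obj -> Mor;
  comp : Mor -> Mor -> Mor;
  dom_idm : forall X, dom (idm X) = X;
  cod_idm : forall X, cod (idm X) = X;
  dom_comp : forall f g, cod f = dom g -> dom (comp g f) = dom f;
  cod_comp : forall f g, cod f = dom g -> cod (comp g f) = cod g;
  comp_idl : forall f, comp (idm (cod f)) f = f;
  comp_idr : forall f, comp f (idm (dom f)) = f;
  compA : forall f g h, cod f = dom g -> cod g = dom h ->
            comp h (comp g f) = comp (comp h g) f }.
Arguments dom {c} _.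
Arguments cod {c} _.
Arguments idm {c} _.
Arguments comp {c} _ _.

Definition listing (T : Type) (P : T -> Prop) (s : list T) : Prop :=
  List.NoDup s /\ forall x, List.In x s <-> P x.
Definition finite_set (T : Type) (P : T -> Prop) : Prop := exists s, listing P s.
Definition enum_of (T : Type) (P : T -> Prop) : list T :=
  match excluded_middle_informative (finite_set P) with
  | left H => proj1_sig (constructive_indefinite_description _ H)
  | right _ => nil
  end.
Definition ncard (T : Type) (P : T -> Prop) : nat := size (enum_of P).

Section Cat.
Variable C : category.

Definition is_factorization (phi : Mor C) (p : Mor C * Mor C) : Prop :=
  cod p.1 = dom p.2 /\ comp p.2 p.1 = phi.

Definition decomposition_finite : Prop :=
  forall phi : Mor C, finite_set (is_factorization phi).

Definition factorizations (phi : Mor C) : list (Mor C * Mor C) :=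
  enum_of (is_factorization phi).

Definition is_iso (f : Mor C) : Prop :=
  exists g, [/\ cod f = dom g, cod g = dom f,
                comp g f = idm (dom f) & comp f g = idm (cod f)].

Definition Aut (X : Obj C) : Mor C -> Prop :=
  fun f => [/\ dom f = X, cod f = X & is_iso f].
Definition Iso (X : Obj C) : Obj C -> Prop :=
  fun Y => exists f, [/\ dom f = X, cod f = Y & is_iso f].

Definition sim (f g : Mor C) : Prop :=
  exists s s' : Mor C, is_iso s /\ is_iso s' /\ dom s = dom f /\ cod s = dom g /\
    dom s' = cod f /\ cod s' = cod g /\ comp s' f = comp g s.
End Cat.

(* Free R-module on a type T: elements are (represented by) formal sums
   [seq (r_i, t_i)], with coefficient function [fcoef]. *)
Section Free.
Variable R : comRingType.

Definition dirac (T : Type) (t u : T) : R :=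
  if excluded_middle_informative (t = u) then 1 else 0.

Definition fcoef (T : Type) (s : seq (R * T)) (u : T) : R :=
  \sum_(p <- s) p.1 * dirac p.2 u.

(* "u is an element of R[T]" i.e. finitely supported *)
Definition is_elt (T : Type) (u : T -> R) : Prop :=
  exists s : seq (R * T), forall x, u x = fcoef s x.

Inductive span (T : Type) (G : (T -> R) -> Prop) : (T -> R) -> Prop :=
| span_gen u : G u -> span G u
| span_0 : span G (fun _ => 0)
| span_add u v : span G u -> span G v -> span G (fun x => u x + v x)
| span_scale r u : span G u -> span G (fun x => r * u x)
| span_ext u v : (forall x, u x = v x) -> span G u -> span G v.

Variable C : category.

Definition Csim_gen (u : Mor C -> R) : Prop :=
  exists f g, sim f g /\ forall x, u x = dirac f x - dirac g x.
Definition Csim : (Mor C -> R) -> Prop := span Csim_gen.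

(* B ⊗ C_sim + C_sim ⊗ B inside B ⊗ B = R[Mor × Mor] *)
Definition tens2 (u v : Mor C -> R) : Mor C * Mor C -> R :=
  fun p => u p.1 * v p.2.
Definition tens3 (u v w : Mor C -> R) : Mor C * Mor C * Mor C -> R :=
  fun p => u p.1.1 * v p.1.2 * w p.2.
Definition K2_gen (t : Mor C * Mor C -> R) : Prop :=
  exists u v, ((is_elt u /\ Csim v) \/ (Csim u /\ is_elt v)) /\
              forall x, t x = tens2 u v x.
Definition K2 := span K2_gen.
Definition K3_gen (t : Mor C * Mor C * Mor C -> R) : Prop :=
  exists u v w, [\/ [/\ Csim u, is_elt v & is_elt w],
                    [/\ is_elt u, Csim v & is_elt w] |
                    [/\ is_elt u, is_elt v & Csim w]] /\
              forall x, t x = tens3 u v w x.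
Definition K3 := span K3_gen.

Definition Delta (s : seq (R * Mor C)) : seq (R * (Mor C * Mor C)) :=
  flatten [seq [seq (p.1, q) | q <- factorizations p.2] | p <- s].
Definition Delta_l (t : seq (R * (Mor C * Mor C))) : seq (R * (Mor C * Mor C * Mor C)) :=
  flatten [seq [seq (p.1, (q.1, q.2, p.2.2)) | q <- factorizations p.2.1] | p <- t].
Definition Delta_r (t : seq (R * (Mor C * Mor C))) : seq (R * (Mor C * Mor C * Mor C)) :=
  flatten [seq [seq (p.1, (p.2.1, q.1, q.2)) | q <- factorizations p.2.2] | p <- t].
End Free.

Section Counit.
Variables (R : comUnitRingType) (C : category).

Definition epsbar (f : Mor C) : R :=
  match excluded_middle_informative (exists X, sim f (idm X)) with
  | left H => let X := proj1_sig (constructive_indefinite_description _ H) in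
              ((ncard (Iso X) * ncard (Aut X))%N%:R)^-1
  | right _ => 0
  end.

Definition epsl (t : seq (R * (Mor C * Mor C))) : seq (R * Mor C) :=
  [seq (p.1 * epsbar p.2.1, p.2.2) | p <- t].
Definition epsr (t : seq (R * (Mor C * Mor C))) : seq (R * Mor C) :=
  [seq (p.1 * epsbar p.2.2, p.2.1) | p <- t].
End Counit.

(* Main.v *)
Require Import Defs.
From Stdlib Require Import ClassicalEpsilon Classical List FinFun.
From HB Require Import structures.
From mathcomp Require Import all_boot all_order all_algebra ring.
Import Defs.
Import GRing.Theory.
Local Open Scope ring_scope.

Set Implicit Arguments. Unset Strict Implicit. Unset Printing Implicit Defensive.
Import GRing.Theory.
Local Open Scope ring_scope.

Lemma size_len (T : Type) (s : seq T) : size s = length s.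
Proof. by elim: s => //= a s ->. Qed.

Lemma In_map_seq (A B : Type) (f : A -> B) (l : seq A) y :
  In y [seq f x | x <- l] <-> exists x, f x = y /\ In x l.
Proof.
elim: l => [|a l IH] /=; first by split => // -[x []].
split.
- case=> [<-|/IH [x [Hx Hin]]]; first by exists a; auto.
  by exists x; auto.
- case=> x [Hx [Ha|Hin]]; first by left; subst.
  by right; apply/IH; exists x.
Qed.

Lemma NoDup_map_in (A B : Type) (f : A -> B) (l : seq A) :
  NoDup l -> (forall x y, In x l -> In y l -> f x = f y -> x = y) ->
  NoDup [seq f x | x <- l].
Proof.
elim: l => [|a l IH] /= Hnd Hinj; first by constructor.
inversion Hnd; subst; constructor.
- move/In_map_seq => [x [Hx Hin]].
  have E : x = a by apply: Hinj; auto.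
  by subst.
- apply: IH => // x y Hx Hy; apply: Hinj; auto.
Qed.

Lemma In_filter_seq (A : Type) (p : pred A) (l : seq A) x :
  In x (filter p l) <-> In x l /\ p x.
Proof.
elim: l => [|a l IH] /=; first by split => // -[].
case Ha: (p a) => /=.
- split; first by case=> [<-|/IH []]; auto.
  by case=> [[<-|H] Hp]; auto; right; apply/IH.
- rewrite IH; split; first by case; auto.
  by case=> [[E|H] Hp]; [subst; rewrite Ha in Hp|].
Qed.

Lemma NoDup_filter_seq (A : Type) (p : pred A) (l : seq A) :
  NoDup l -> NoDup (filter p l).
Proof.
elim: l => [|a l IH] //= Hnd; inversion Hnd; subst.
case: (p a); last by auto.
constructor; last by auto.
by move/In_filter_seq => [].
Qed.

Lemma listing_size (T : Type) (P Q : T -> Prop) L M :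
  listing P L -> listing Q M -> (forall x, P x <-> Q x) -> size L = size M.
Proof.
move=> [ndL HL] [ndM HM] E; rewrite !size_len; apply/eqP; rewrite eqn_leq.
apply/andP; split; apply/leP; apply: NoDup_incl_length => // x Hx.
- by apply/HM/E/HL.
- by apply/HL/E/HM.
Qed.

Lemma listing_bij (A B : Type) (P : A -> Prop) (Q : B -> Prop) L M (m : A -> B) :
  listing P L -> listing Q M -> (forall x, P x -> Q (m x)) ->
  (forall x y, P x -> P y -> m x = m y -> x = y) ->
  (forall y, Q y -> exists x, P x /\ m x = y) -> size L = size M.
Proof.
move=> [ndL HL] HM HPQ Hinj Hsur.
rewrite -(size_map m); apply: (listing_size (P := fun y => exists x, P x /\ m x = y)) HM _.
- split.
  + apply: NoDup_map_in => // x y Hx Hy; apply: Hinj; by apply/HL.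
  + move=> y; rewrite In_map_seq; split.
    * by case=> x [<- /HL]; eauto.
    * by case=> x [/HL Hx <-]; eauto.
- move=> y; split; first by case=> x [/HPQ H <-].
  exact: Hsur.
Qed.

Lemma finite_cover (T : Type) (Q : T -> Prop) (L : seq T) :
  (forall x, Q x -> In x L) -> finite_set Q.
Proof.
move=> HL.
suff [L' [nd HL']] : exists L', NoDup L' /\ forall x, In x L' <-> In x L /\ Q x.
  by exists L'; split => // x; rewrite HL'; split; [case|]; auto.
elim: L {HL} => [|a L [L' [nd HL']]].
  by exists nil; split; [constructor|move=> x /=; split; [|case]].
case: (classic (Q a /\ ~ In a L')) => [[Qa Na]|H].
- exists (a :: L'); split; first by constructor.
  move=> x /=; rewrite HL'; split.
  + by case=> [<-|[]]; auto.
  + by case=> [[<-|Hx] Qx]; auto.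
- exists L'; split => // x; rewrite HL' /=; split; first by case; auto.
  case=> [[E|Hx] Qx]; last by auto.
  subst x; split => //. have [] := proj1 (HL' a) => //.
  by apply: NNPP => Hn; apply: H.
Qed.

Lemma enum_ofP (T : Type) (P : T -> Prop) : finite_set P -> listing P (enum_of P).
Proof.
move=> H; rewrite /enum_of; case: excluded_middle_informative => // H'.
exact: proj2_sig.
Qed.

Lemma ncard_listing (T : Type) (P : T -> Prop) L : listing P L -> ncard P = size L.
Proof.
move=> HL; have Hf : finite_set P by exists L.
by rewrite /ncard; apply: listing_size (enum_ofP Hf) HL _.
Qed.

Set Implicit Arguments. Unset Strict Implicit. Unset Printing Implicit Defensive.
Import GRing.Theory.
Local Open Scope ring_scope.

Section FreeL.
Variable R : comNzRingType.

Lemma dirac_eq (T : Type) (t : T) : dirac R t t = 1.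
Proof. by rewrite /dirac; case: excluded_middle_informative. Qed.
Lemma dirac_neq (T : Type) (t u : T) : t <> u -> dirac R t u = 0.
Proof. by rewrite /dirac; case: excluded_middle_informative. Qed.
Lemma dirac_pair (A B : Type) (a x : A) (b y : B) :
  dirac R (a, b) (x, y) = dirac R a x * dirac R b y.
Proof.
case: (classic (a = x)) => [<-|H].
  case: (classic (b = y)) => [<-|H']; first by rewrite !dirac_eq mulr1.
  by rewrite dirac_eq !dirac_neq ?mulr0 // => -[].
by rewrite !(dirac_neq H) ?mul0r ?dirac_neq // => -[].
Qed.

Lemma fcoef_nil (T : Type) u : fcoef (@nil (R * T)) u = 0.
Proof. by rewrite /fcoef big_nil. Qed.
Lemma fcoef_cons (T : Type) (p : R * T) s u :
  fcoef (p :: s) u = p.1 * dirac R p.2 u + fcoef s u.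
Proof. by rewrite /fcoef big_cons. Qed.
Lemma fcoef_cat (T : Type) (s1 s2 : seq (R * T)) u :
  fcoef (s1 ++ s2) u = fcoef s1 u + fcoef s2 u.
Proof. by rewrite /fcoef big_cat. Qed.

Definition ind (T : Type) (P : T -> Prop) (x : T) : R :=
  if excluded_middle_informative (P x) then 1 else 0.

Lemma ind_T (T : Type) (P : T -> Prop) x : P x -> ind P x = 1.
Proof. by rewrite /ind; case: excluded_middle_informative. Qed.
Lemma ind_F (T : Type) (P : T -> Prop) x : ~ P x -> ind P x = 0.
Proof. by rewrite /ind; case: excluded_middle_informative. Qed.

Lemma sum_dirac_NoDup (T : Type) (L : seq T) x :
  NoDup L -> \sum_(q <- L) dirac R q x = ind (fun y => In y L) x.
Proof.
elim: L => [|a L IH] Hnd; first by rewrite big_nil ind_F.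
inversion Hnd; subst; rewrite big_cons IH //.
case: (classic (a = x)) => [E|E].
  subst; rewrite dirac_eq ind_F // ind_T /=; auto; by rewrite addr0.
rewrite dirac_neq // add0r.
case: (classic (In x L)) => H; first by rewrite !ind_T //=; auto.
by rewrite !ind_F //= => -[].
Qed.

Lemma sum_dirac_listing (T : Type) (P : T -> Prop) L x :
  listing P L -> \sum_(q <- L) dirac R q x = ind P x.
Proof.
move=> [nd HL]; rewrite sum_dirac_NoDup //.
case: (classic (P x)) => H; first by rewrite !ind_T //; apply/HL.
by rewrite !ind_F // => /HL.
Qed.

Lemma fcoef_flatten (A T : Type) (g : A -> seq (R * T)) (s : seq A) u :
  fcoef (flatten [seq g p | p <- s]) u = \sum_(p <- s) fcoef (g p) u.
Proof. by rewrite /fcoef big_flatten /= big_map. Qed.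

End FreeL.

Set Implicit Arguments. Unset Strict Implicit. Unset Printing Implicit Defensive.
Import GRing.Theory.
Local Open Scope ring_scope.

Unset Implicit Arguments.
Section Cat.
Variable C : category.
Implicit Types f g h a b : Mor C.

Lemma cA f g h : cod f = dom g -> cod g = dom h -> comp h (comp g f) = comp (comp h g) f.
Proof. exact: compA. Qed.
Lemma dC f g : cod f = dom g -> dom (comp g f) = dom f.
Proof. exact: dom_comp. Qed.
Lemma cC f g : cod f = dom g -> cod (comp g f) = cod g.
Proof. exact: cod_comp. Qed.

Lemma cancel_r a b b' : is_iso a -> cod a = dom b -> cod a = dom b' ->
  comp b a = comp b' a -> b = b'.
Proof.
move=> [g [H1 H2 H3 H4]] Hb Hb' E.
rewrite -(comp_idr b) -(comp_idr b') -Hb -Hb' -H4.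
by rewrite !cA // E.
Qed.

Lemma cancel_l b a a' : is_iso b -> cod a = dom b -> cod a' = dom b ->
  comp b a = comp b a' -> a = a'.
Proof.
move=> [g [H1 H2 H3 H4]] Ha Ha' E.
rewrite -(comp_idl a) -(comp_idl a') Ha Ha' -H3.
by rewrite -!cA // E.
Qed.

Lemma iso_id (X : Obj C) : is_iso (idm X).
Proof.
exists (idm X); rewrite dom_idm cod_idm; split => //.
- by rewrite -{1}(cod_idm X) comp_idl.
- by rewrite -{1}(cod_idm X) comp_idl.
Qed.

Lemma iso_comp f g : is_iso f -> is_iso g -> cod f = dom g -> is_iso (comp g f).
Proof.
move=> [f' [F1 F2 F3 F4]] [g' [G1 G2 G3 G4]] E.
exists (comp f' g'); rewrite ?dC ?cC //; try congruence.
split => //.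
- rewrite -(cA (comp g f) g' f'); last by congruence.
    2: by rewrite cC.
  rewrite (cA f g g') // G3 -E comp_idl //.
- rewrite -(cA (comp f' g') f g); last by [].
    2: by rewrite cC //; congruence.
  rewrite (cA g' f' f) //; last by congruence.
  by rewrite F4 E -G2 comp_idl.
Qed.

Definition minv f : Mor C :=
  match excluded_middle_informative (is_iso f) with
  | left H => proj1_sig (constructive_indefinite_description _ H)
  | right _ => f end.

Lemma invP f : is_iso f -> [/\ cod f = dom (minv f), cod (minv f) = dom f,
  comp (minv f) f = idm (dom f) & comp f (minv f) = idm (cod f)].
Proof.
rewrite /minv; case: excluded_middle_informative => // H _.
exact: (proj2_sig (constructive_indefinite_description _ H)).
Qed.

Lemma iso_inv f : is_iso f -> is_iso (minv f).
Proof.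
move=> /invP [H1 H2 H3 H4]; exists f; split => //; congruence.
Qed.

Lemma inv_uniq f g g' : cod f = dom g -> cod g = dom f -> comp g f = idm (dom f) ->
  cod f = dom g' -> cod g' = dom f -> comp f g' = idm (cod f) -> g = g'.
Proof.
move=> H1 H2 H3 H1' H2' H4'.
rewrite -(comp_idr g) -H1 -H4' (cA g' f g H2' H1).
by rewrite H3 -H2' comp_idl.
Qed.

Lemma inv_inv f : is_iso f -> minv (minv f) = f.
Proof.
move=> Hf; have [H1 H2 H3 H4] := invP f Hf.
have [K1 K2 K3 K4] := invP _ (iso_inv f Hf).
symmetry; apply: (inv_uniq (minv f)) => //; congruence.
Qed.

End Cat.
Arguments minv {C} f.

Set Implicit Arguments. Unset Strict Implicit. Unset Printing Implicit Defensive.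
Import GRing.Theory.
Local Open Scope ring_scope.

Section Delta.
Variable C : category.
Hypothesis dfin : decomposition_finite C.
Variable R : comNzRingType.

Lemma fact_listing (phi : Mor C) : listing (is_factorization phi) (factorizations phi).
Proof. exact: enum_ofP. Qed.

Lemma ind_fact (phi : Mor C) (p : Mor C * Mor C) : cod p.1 = dom p.2 ->
  ind R (is_factorization phi) p = dirac R phi (comp p.2 p.1).
Proof.
move=> H; case: (classic (phi = comp p.2 p.1)) => E.
  by rewrite ind_T ?E ?dirac_eq.
by rewrite ind_F ?dirac_neq // => -[_ E']; apply: E.
Qed.

Lemma fcoef_Delta (s : seq (R * Mor C)) p :
  fcoef (Delta s) p = if excluded_middle_informative (cod p.1 = dom p.2)
                      then fcoef s (comp p.2 p.1) else 0.
Proof.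
rewrite /Delta fcoef_flatten.
under eq_bigr => x _ do rewrite /fcoef big_map /= -mulr_sumr (sum_dirac_listing _ _ (fact_listing _)).
case: excluded_middle_informative => H.
  by rewrite /fcoef; apply: eq_bigr => x _; rewrite ind_fact.
by rewrite big1 // => x _; rewrite ind_F ?mulr0 // => -[].
Qed.

Lemma fcoef_Delta_l (t : seq (R * (Mor C * Mor C))) x y z :
  fcoef (Delta_l t) (x, y, z) = if excluded_middle_informative (cod x = dom y)
                      then fcoef t (comp y x, z) else 0.
Proof.
rewrite /Delta_l fcoef_flatten.
under eq_bigr => p _ do rewrite /fcoef big_map /=.
have E : forall p : R * (Mor C * Mor C),
  \sum_(j <- factorizations p.2.1) p.1 * dirac R (j.1, j.2, p.2.2) (x, y, z) =
  p.1 * dirac R p.2.2 z * ind R (is_factorization p.2.1) (x, y).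
  move=> p; rewrite -mulrA -mulr_sumr; congr (_ * _).
  under eq_bigr => j _ do rewrite dirac_pair -surjective_pairing mulrC.
  by rewrite -mulr_sumr (sum_dirac_listing _ _ (fact_listing _)).
under eq_bigr => p _ do rewrite E.
case: excluded_middle_informative => H.
  rewrite /fcoef; apply: eq_bigr => p _; rewrite ind_fact //= -mulrA; congr (_ * _).
  by rewrite mulrC [in RHS](surjective_pairing p.2) dirac_pair.
by rewrite big1 // => p _; rewrite ind_F ?mulr0 // => -[].
Qed.

Lemma fcoef_Delta_r (t : seq (R * (Mor C * Mor C))) x y z :
  fcoef (Delta_r t) (x, y, z) = if excluded_middle_informative (cod y = dom z)
                      then fcoef t (x, comp z y) else 0.
Proof.
rewrite /Delta_r fcoef_flatten.
under eq_bigr => p _ do rewrite /fcoef big_map /=.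
have E : forall p : R * (Mor C * Mor C),
  \sum_(j <- factorizations p.2.2) p.1 * dirac R (p.2.1, j.1, j.2) (x, y, z) =
  p.1 * dirac R p.2.1 x * ind R (is_factorization p.2.2) (y, z).
  move=> p; rewrite -mulrA -mulr_sumr; congr (_ * _).
  have F : forall j : Mor C * Mor C, dirac R (p.2.1, j.1, j.2) (x, y, z)
     = dirac R p.2.1 x * dirac R j (y, z).
    move=> [j1 j2] /=.
    case: (classic (p.2.1 = x)) => [<-|Hx].
      case: (classic ((j1, j2) = (y, z))) => [Ej|Ej].
        by case: Ej => -> ->; rewrite !dirac_eq mulr1.
      rewrite (dirac_neq _ Ej) mulr0; apply: dirac_neq => Eq; apply: Ej; injection Eq => E2 E1; by rewrite E1 E2.
    by rewrite (dirac_neq _ Hx) mul0r dirac_neq // => -[].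
  under eq_bigr => j _ do rewrite F.
  by rewrite -mulr_sumr (sum_dirac_listing _ _ (fact_listing _)).
under eq_bigr => p _ do rewrite E.
case: excluded_middle_informative => H.
  rewrite /fcoef; apply: eq_bigr => p _; rewrite ind_fact //= -mulrA; congr (_ * _).
  by rewrite [in RHS](surjective_pairing p.2) dirac_pair.
by rewrite big1 // => p _; rewrite ind_F ?mulr0 // => -[].
Qed.

End Delta.

Set Implicit Arguments. Unset Strict Implicit. Unset Printing Implicit Defensive.
Import GRing.Theory.
Local Open Scope ring_scope.

Lemma coassoc (C : category) (dfin : decomposition_finite C) (R : comNzRingType)
  (s : seq (R * Mor C)) x :
  fcoef (Delta_l (Delta s)) x - fcoef (Delta_r (Delta s)) x = 0.
Proof.
case: x => [[x y] z]; rewrite fcoef_Delta_l // fcoef_Delta_r //.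
case: excluded_middle_informative => Hxy; case: excluded_middle_informative => Hyz.
- rewrite !fcoef_Delta //=.
  case: excluded_middle_informative => H1; last by exfalso; apply: H1; rewrite cC.
  case: excluded_middle_informative => H2; last by exfalso; apply: H2; rewrite dC.
  by rewrite cA // subrr.
- rewrite /= fcoef_Delta //=.
  case: excluded_middle_informative => H1 //; last by rewrite subrr.
  by exfalso; apply: Hyz; rewrite -H1 cC.
- rewrite /= fcoef_Delta //=.
  case: excluded_middle_informative => H1 //; last by rewrite subrr.
  by exfalso; apply: Hxy; rewrite H1 dC.
- by rewrite subrr.
Qed.

Set Implicit Arguments. Unset Strict Implicit. Unset Printing Implicit Defensive.
Import GRing.Theory.
Local Open Scope ring_scope.

Unset Implicit Arguments.
Section Transport.
Variable C : category.
Implicit Types f g h a b c d s : Mor C.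

Lemma compKr s c : is_iso s -> dom c = cod s -> comp (comp c s) (minv s) = c.
Proof.
move=> Hs Hc; have [H1 H2 H3 H4] := invP C s Hs.
by rewrite -cA ?H4 -?Hc ?comp_idr //; congruence.
Qed.

Lemma compKl s d : is_iso s -> cod d = dom s -> comp (minv s) (comp s d) = d.
Proof.
move=> Hs Hd; have [H1 H2 H3 H4] := invP C s Hs.
by rewrite cA ?H3 -?Hd ?comp_idl //; congruence.
Qed.

Lemma compKr' s c : is_iso s -> dom c = dom s -> comp (comp c (minv s)) s = c.
Proof.
move=> Hs Hc; have [H1 H2 H3 H4] := invP C s Hs.
by rewrite -cA ?H3 -?Hc ?comp_idr //; congruence.
Qed.

Lemma compKl' s d : is_iso s -> cod d = cod s -> comp s (comp (minv s) d) = d.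
Proof.
move=> Hs Hd; have [H1 H2 H3 H4] := invP C s Hs.
by rewrite cA ?H4 -?Hd ?comp_idl //; congruence.
Qed.

Definition simd f g s s' := is_iso s /\ is_iso s' /\ dom s = dom f /\ cod s = dom g /\
    dom s' = cod f /\ cod s' = cod g /\ comp s' f = comp g s.

Lemma simd_inv f g s s' : simd f g s s' -> simd g f (minv s) (minv s').
Proof.
move=> [Is [Is' [D1 [D2 [D3 [D4 E]]]]]].
have [A1 A2 A3 A4] := invP C s Is. have [B1 B2 B3 B4] := invP C s' Is'.
do 6 (split; try (apply: iso_inv => //); try congruence).
apply: (cancel_r C s); try (by rewrite dC; congruence); try done.
rewrite compKr'; [|done|by rewrite D1].
rewrite -cA; try congruence.
by rewrite -E compKl //.
Qed.

Lemma transport f g s s' a b : simd f g s s' -> is_factorization f (a, b) ->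
  is_factorization g (comp a (minv s), comp s' b).
Proof.
move=> [Is [Is' [D1 [D2 [D3 [D4 E]]]]]] [/= Hab Ef].
have [A1 A2 A3 A4] := invP C s Is.
have Ha : dom a = dom f by rewrite -Ef dC.
have Hb : cod b = cod f by rewrite -Ef cC.
split => /=.
  by rewrite cC ?dC //; congruence.
rewrite -(cA C (comp a (minv s)) b s'); last by congruence.
  2: by rewrite cC //; congruence.
rewrite (cA C (minv s) a b) //; last by congruence.
rewrite Ef (cA C (minv s) f s') //; try congruence.
rewrite E -(cA C (minv s) s g) //; try congruence.
by rewrite A4 D2 comp_idr.
Qed.

Lemma sim_simd f g : sim f g -> exists s s', simd f g s s'.
Proof. by move=> [s [s' H]]; exists s, s'. Qed.

Lemma simd_sim f g s s' : simd f g s s' -> sim f g.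
Proof. by move=> H; exists s, s'. Qed.

End Transport.
Arguments compKr {C} s c. Arguments compKl {C} s d. Arguments compKr' {C} s c. Arguments compKl' {C} s d.
Arguments simd {C} f g s s'.
Arguments simd_inv {C} [f g s s'] _. Arguments transport {C} [f g s s' a b] _ _.
Arguments sim_simd {C} [f g] _. Arguments simd_sim {C} [f g] s s' _.

Set Implicit Arguments. Unset Strict Implicit. Unset Printing Implicit Defensive.
Import GRing.Theory.
Local Open Scope ring_scope.

Section Part1.
Variable R : comNzRingType.
Variable C : category.
Hypothesis dfin : decomposition_finite C.

Lemma K2_sum (A : Type) (L : seq A) (F : A -> Mor C * Mor C -> R) :
  (forall q, In q L -> K2 (F q)) -> K2 (fun p => \sum_(q <- L) F q p).
Proof.
elim: L => [|a L IH] H.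
  by apply: (span_ext (u := fun _ => 0)) => [x|]; [rewrite big_nil|apply: span_0].
apply: (span_ext (u := fun p => F a p + \sum_(q <- L) F q p)) => [x|].
  by rewrite big_cons.
apply: span_add; first by apply: H; left.
by apply: IH => q Hq; apply: H; right.
Qed.

Lemma is_elt_dirac (b : Mor C) : is_elt (dirac R b).
Proof. by exists [:: (1, b)] => x; rewrite fcoef_cons fcoef_nil mul1r addr0. Qed.

Lemma Csim_diff (f g : Mor C) : sim f g -> Csim (fun x => dirac R f x - dirac R g x).
Proof. by move=> H; apply: span_gen; exists f, g. Qed.

Lemma K2_term (a b a' b' : Mor C) : sim a a' -> sim b b' ->
  K2 (fun p => dirac R (a, b) p - dirac R (a', b') p).
Proof.
move=> Ha Hb.
apply: (span_ext (u := fun p => tens2 (fun x => dirac R a x - dirac R a' x) (dirac R b) p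
                     + tens2 (dirac R a') (fun x => dirac R b x - dirac R b' x) p)).
  move=> [x y]; rewrite /tens2 /= !dirac_pair; ring.
apply: span_add; apply: span_gen.
- exists (fun x => dirac R a x - dirac R a' x), (dirac R b); split => //.
  by right; split; [apply: Csim_diff|apply: is_elt_dirac].
- exists (dirac R a'), (fun x => dirac R b x - dirac R b' x); split => //.
  by left; split; [apply: is_elt_dirac|apply: Csim_diff].
Qed.

Lemma core (f g : Mor C) : sim f g ->
  K2 (fun p => ind R (is_factorization f) p - ind R (is_factorization g) p).
Proof.
move=> /sim_simd [s [s' Hss]].
have Hss' := Hss; move: Hss' => [Is [Is' [D1 [D2 [D3 [D4 E]]]]]].
set m := fun q : Mor C * Mor C => (comp q.1 (minv s), comp s' q.2).
have [A1 A2 A3 A4] := invP C s Is.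
have LG : listing (is_factorization g) [seq m q | q <- factorizations f].
  have [ndf Hf] := fact_listing dfin f.
  split.
  - apply: NoDup_map_in => // [[a b] [a1 b1]] /Hf [/= Hab Eab] /Hf [/= Hab1 Eab1] [/= E1 E2].
    have Ha : dom a = dom f by rewrite -Eab dC.
    have Ha1 : dom a1 = dom f by rewrite -Eab1 dC.
    have Hb : cod b = cod f by rewrite -Eab cC.
    have Hb1 : cod b1 = cod f by rewrite -Eab1 cC.
    congr (_, _).
    + apply: (cancel_r C (minv s)); try (apply: iso_inv); try congruence.
    + apply: (cancel_l C s'); try congruence.
  - move=> [c d]; rewrite In_map_seq; split.
    + move=> [[a b] [<- /Hf H]]; exact: (transport Hss H).
    + move=> Hcd; have := transport (simd_inv Hss) Hcd; rewrite inv_inv // => H.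
      exists (comp c s, comp (minv s') d); split; last by apply/Hf.
      move: Hcd => [/= Hcd Ecd].
      have Hc : dom c = dom g by rewrite -Ecd dC.
      have Hd : cod d = cod g by rewrite -Ecd cC.
      rewrite /m /= compKr ?compKl' //; congruence.
apply: (span_ext (u := fun p => \sum_(q <- factorizations f) (dirac R q p - dirac R (m q) p))).
  move=> p; rewrite sumrB -(sum_dirac_listing _ _ (fact_listing dfin f)).
  by rewrite -(sum_dirac_listing _ _ LG) big_map.
apply: K2_sum => [[a b]] /(proj2 (fact_listing dfin f)) [/= Hab Eab].
have Ha : dom a = dom f by rewrite -Eab dC.
have Hb : cod b = cod f by rewrite -Eab cC.
apply: K2_term.
- rewrite /=; apply: (simd_sim s (idm (cod a))).
  do 6 (split; rewrite ?dom_idm ?cod_idm ?dC ?cC; try (apply: iso_id); try congruence).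
  by rewrite comp_idl compKr'; congruence.
- rewrite /=; apply: (simd_sim (idm (dom b)) s').
  do 6 (split; rewrite ?dom_idm ?cod_idm ?dC ?cC; try (apply: iso_id); try congruence).
  rewrite -{1}(comp_idr (comp s' b)) dC //; congruence.
Qed.

End Part1.

Section Part1b.
Variable R : comNzRingType.
Variable C : category.
Hypothesis dfin : decomposition_finite C.

Definition DF (u : Mor C -> R) (p : Mor C * Mor C) : R :=
  if excluded_middle_informative (cod p.1 = dom p.2) then u (comp p.2 p.1) else 0.

Lemma Csim_K2 u : Csim u -> K2 (DF u).
Proof.
elim=> {u}.
- move=> u [f [g [Hfg Hu]]].
  apply: (span_ext (u := fun p => ind R (is_factorization f) p - ind R (is_factorization g) p)).
    move=> p; rewrite /DF; case: excluded_middle_informative => H.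
      by rewrite !ind_fact // Hu.
    by rewrite !ind_F ?subrr // => -[].
  exact: core.
- apply: (span_ext (u := fun _ => 0)); last by apply: span_0.
  by move=> p; rewrite /DF; case: excluded_middle_informative.
- move=> u v _ Hu _ Hv; apply: (span_ext (u := fun p => DF u p + DF v p)); last exact: span_add.
  move=> p; rewrite /DF; case: excluded_middle_informative => H //. by rewrite addr0.
- move=> r u _ Hu; apply: (span_ext (u := fun p => r * DF u p)); last exact: span_scale.
  move=> p; rewrite /DF; case: excluded_middle_informative => H //. by rewrite mulr0.
- move=> u v E _ Hu; apply: (span_ext (u := DF u)) => // p.
  by rewrite /DF; case: excluded_middle_informative => H //; rewrite E.
Qed.

Lemma part1 (s : seq (R * Mor C)) : Csim (fcoef s) -> K2 (fcoef (Delta s)).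
Proof.
move=> /Csim_K2 H; apply: (span_ext (u := DF (fcoef s))) => // p.
by rewrite fcoef_Delta.
Qed.
End Part1b.

Set Implicit Arguments. Unset Strict Implicit. Unset Printing Implicit Defensive.
Import GRing.Theory.
Local Open Scope ring_scope.

Lemma NoDup_prod (A B : Type) (l : list A) (l' : list B) :
  NoDup l -> NoDup l' -> NoDup (list_prod l l').
Proof.
elim: l => [|a l IH] /= H H'; first by constructor.
inversion H; subst.
apply: NoDup_app.
- by apply: Injective_map_NoDup => // x y [].
- by apply: IH.
- move=> [x y] /in_map_iff [z [[E1 E2] _]] /in_prod_iff [Hx _]; subst; auto.
Qed.

Lemma sum_eq_in (R : comNzRingType) (A : Type) (L : seq A) (F G : A -> R) :
  (forall q, In q L -> F q = G q) -> \sum_(q <- L) F q = \sum_(q <- L) G q.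
Proof.
elim: L => [|a L IH] H; first by rewrite !big_nil.
by rewrite !big_cons H /=; auto; rewrite IH // => q Hq; apply: H; right.
Qed.

Lemma sum_if_const (R : comNzRingType) (A : Type) (L : seq A) (p : pred A) (c : R) :
  \sum_(q <- L) (if p q then c else 0) = c *+ count p L.
Proof.
elim: L => [|a L IH]; first by rewrite big_nil.
by rewrite big_cons IH /=; case: (p a); rewrite ?add0r // mulrS.
Qed.

Lemma Csim_sum (R : comNzRingType) (C : category) (A : Type) (L : seq A) (F : A -> Mor C -> R) :
  (forall q, In q L -> Csim (F q)) -> Csim (fun p => \sum_(q <- L) F q p).
Proof.
elim: L => [|a L IH] H.
  by apply: (span_ext (u := fun _ => 0)) => [x|]; [rewrite big_nil|apply: span_0].
apply: (span_ext (u := fun p => F a p + \sum_(q <- L) F q p)) => [x|].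
  by rewrite big_cons.
apply: span_add; first by apply: H; left.
by apply: IH => q Hq; apply: H; right.
Qed.

Definition isob (C : category) (f : Mor C) : bool :=
  if excluded_middle_informative (is_iso f) then true else false.
Lemma isobP (C : category) (f : Mor C) : isob f <-> is_iso f.
Proof. by rewrite /isob; case: excluded_middle_informative. Qed.

Section Count.
Variable C : category.
Hypothesis dfin : decomposition_finite C.

Definition ISO (X : Obj C) : Mor C -> Prop := fun f => dom f = X /\ is_iso f.
Definition N (X : Obj C) : nat := ncard (ISO X).

Lemma inv_fact (f : Mor C) : is_iso f -> In (f, minv f) (factorizations (idm (dom f))).
Proof.
move=> Hf; have [H1 H2 H3 H4] := invP C f Hf.
by apply/(proj2 (fact_listing dfin _)); split.
Qed.

Lemma fin_ISO (X : Obj C) : finite_set (ISO X).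
Proof.
apply: (finite_cover (L := [seq q.1 | q <- factorizations (idm X)])) => f [<- Hf].
by apply/In_map_seq; exists (f, minv f); split => //; apply: inv_fact.
Qed.

Lemma fin_Aut (X : Obj C) : finite_set (Aut X).
Proof.
apply: (finite_cover (L := [seq q.1 | q <- factorizations (idm X)])) => f [<- _ Hf].
by apply/In_map_seq; exists (f, minv f); split => //; apply: inv_fact.
Qed.

Lemma fin_Iso (X : Obj C) : finite_set (Iso X).
Proof.
apply: (finite_cover (L := [seq cod q.1 | q <- factorizations (idm X)])) => Y [f [<- <- Hf]].
by apply/In_map_seq; exists (f, minv f); split => //; apply: inv_fact.
Qed.

Definition hY (X Y : Obj C) : Mor C :=
  match excluded_middle_informative (Iso X Y) with
  | left H => proj1_sig (constructive_indefinite_description _ H)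
  | right _ => idm X end.

Lemma hYP (X Y : Obj C) : Iso X Y -> [/\ dom (hY X Y) = X, cod (hY X Y) = Y & is_iso (hY X Y)].
Proof.
rewrite /hY; case: excluded_middle_informative => // H _.
exact: (proj2_sig (constructive_indefinite_description _ H)).
Qed.

Lemma N_prod (X : Obj C) : (ncard (Iso X) * ncard (Aut X))%N = N X.
Proof.
have LI := enum_ofP (fin_Iso X).
have LA := enum_ofP (fin_Aut X).
have LS := enum_ofP (fin_ISO X).
have LP : listing (fun p => Iso X p.1 /\ Aut X p.2) (list_prod (enum_of (Iso X)) (enum_of (Aut X))).
  split; first by apply: NoDup_prod; [case: LI|case: LA].
  move=> [Y a]; rewrite in_prod_iff /=.
  by split; case=> H1 H2; split; [apply/(proj2 LI)|apply/(proj2 LA)|apply/(proj2 LI)|apply/(proj2 LA)].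
rewrite /N /ncard !size_len -multE -length_prod -size_len.
apply: (listing_bij (m := fun p => comp (hY X p.1) p.2)) LP LS _ _ _.
- move=> [Y a] /= [HY [Ha1 Ha2 Ha3]]; have [K1 K2 K3] := hYP HY.
  split; first by rewrite dC //; congruence.
  by apply: iso_comp => //; congruence.
- move=> [Y a] [Y' a'] /= [HY [Ha1 Ha2 Ha3]] [HY' [Ha1' Ha2' Ha3']] E.
  have [K1 K2 K3] := hYP HY; have [K1' K2' K3'] := hYP HY'.
  have EY : Y = Y'.
    by rewrite -K2 -K2' -(cC C a (hY X Y)) -?(cC C a' (hY X Y')) ?E //; congruence.
  subst Y'; congr (_, _).
  by apply: (cancel_l C (hY X Y)) => //; congruence.
- move=> f [Hf If].
  have HY : Iso X (cod f) by exists f.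
  have [K1 K2 K3] := hYP HY.
  have [J1 J2 J3 J4] := invP C _ K3.
  exists (cod f, comp (minv (hY X (cod f))) f) => /=; split.
  + split => //; split; first by rewrite dC; congruence.
    * by rewrite cC; congruence.
    * by apply: iso_comp => //; [apply: iso_inv|congruence].
  + by rewrite compKl' //; congruence.
Qed.

Lemma N_iso (h : Mor C) : is_iso h -> N (dom h) = N (cod h).
Proof.
move=> Ih; have [J1 J2 J3 J4] := invP C _ Ih.
rewrite /N /ncard; symmetry.
apply: (listing_bij (m := fun f => comp f h)) (enum_ofP (fin_ISO _)) (enum_ofP (fin_ISO _)) _ _ _.
- move=> f [Hf If]; split; first by rewrite dC.
  by apply: iso_comp.
- move=> f f' [Hf If] [Hf' If'] E.
  by apply: (cancel_r C h) => //; congruence.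
- move=> g [Hg Ig]; exists (comp g (minv h)); split.
  + split; first by rewrite dC; congruence.
    by apply: iso_comp => //; [apply: iso_inv|congruence].
  + by rewrite compKr' //; congruence.
Qed.

End Count.

Set Implicit Arguments. Unset Strict Implicit. Unset Printing Implicit Defensive.
Import GRing.Theory.
Local Open Scope ring_scope.

Section Counit.
Variable C : category.
Hypothesis dfin : decomposition_finite C.
Variable R : comUnitRingType.
Hypothesis unitH : forall X : Obj C, ((ncard (Iso X) * ncard (Aut X))%N%:R : R) \is a GRing.unit.

Lemma unitN (X : Obj C) : ((N X)%:R : R) \is a GRing.unit.
Proof. by rewrite -N_prod. Qed.

Lemma sim_iso (a : Mor C) (X : Obj C) : sim a (idm X) -> is_iso a /\ N (dom a) = N X.
Proof.
move=> /sim_simd [s [s' [Is [Is' [D1 [D2 [D3 [D4 E]]]]]]]].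
rewrite dom_idm in D2; rewrite cod_idm in D4.
split; last by rewrite -D1 N_iso // D2.
have -> : a = comp (minv s') (comp s' a) by rewrite compKl //; congruence.
rewrite E -D2 comp_idl.
apply: iso_comp => //; first by apply: iso_inv.
have [J1 J2 J3 J4] := invP C _ Is'; congruence.
Qed.

Lemma epsbar_iso (a : Mor C) : is_iso a -> epsbar R a = ((N (dom a))%:R)^-1.
Proof.
move=> Ia; rewrite /epsbar; case: excluded_middle_informative => H.
  set X := proj1_sig _.
  have HX : sim a (idm X) := proj2_sig (constructive_indefinite_description _ H).
  by rewrite N_prod //; have [_ ->] := sim_iso HX.
exfalso; apply: H; exists (dom a).
have [J1 J2 J3 J4] := invP C _ Ia.
apply: (simd_sim (idm (dom a)) (minv a)).
do 6 (split; rewrite ?dom_idm ?cod_idm; try (apply: iso_id); try (apply: iso_inv => //); try congruence).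
by rewrite J3 -{3}(dom_idm (dom a)) comp_idr.
Qed.

Lemma epsbar_niso (a : Mor C) : ~ is_iso a -> epsbar R a = 0.
Proof.
move=> Na; rewrite /epsbar; case: excluded_middle_informative => // H.
exfalso; apply: Na.
exact: (proj1 (sim_iso (proj2_sig (constructive_indefinite_description _ H)))).
Qed.

Lemma sum_eps_l (phi : Mor C) :
  \sum_(q <- factorizations phi) epsbar R q.1 = 1.
Proof.
have LF := fact_listing dfin phi.
rewrite (sum_eq_in (G := fun q => if isob q.1 then ((N (dom phi))%:R)^-1 else 0)).
  rewrite sum_if_const -size_filter.
  have -> : size [seq x <- factorizations phi | isob x.1] = N (dom phi).
    rewrite /N /ncard.
    apply: (listing_bij (P := fun q => is_factorization phi q /\ is_iso q.1) (m := fun q => q.1)) (enum_ofP (fin_ISO dfin _)) _ _ _.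
    - split; first by apply: NoDup_filter_seq; case: LF.
      move=> q; rewrite In_filter_seq isobP; split; case=> H1 H2; split => //.
      + by apply/(proj2 LF).
      + by apply/(proj2 LF).
    - move=> [a b] [[/= Hab E] Ia]; split => //; by rewrite -E dC.
    - move=> [a b] [a' b'] [[/= Hab E] Ia] [[/= Hab' E'] Ia'] /= Ea; subst a'.
      congr (_, _); apply: (cancel_r C a) => //; congruence.
    - move=> f [Hf If]; exists (f, comp phi (minv f)); split => //.
      have [J1 J2 J3 J4] := invP C _ If.
      split => //; split => /=; first by rewrite dC; congruence.
      by rewrite compKr' //; congruence.
  by rewrite -[_ *+ _]mulr_natr mulVr // unitN.
move=> [a b] /(proj2 LF) [/= Hab E] /=.
rewrite /isob; case: excluded_middle_informative => Ia.
  by rewrite epsbar_iso // -E dC.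
by rewrite epsbar_niso.
Qed.

Lemma sum_eps_r (phi : Mor C) :
  \sum_(q <- factorizations phi) epsbar R q.2 = 1.
Proof.
have LF := fact_listing dfin phi.
rewrite (sum_eq_in (G := fun q => if isob q.2 then ((N (cod phi))%:R)^-1 else 0)).
  rewrite sum_if_const -size_filter.
  have -> : size [seq x <- factorizations phi | isob x.2] = N (cod phi).
    rewrite /N /ncard.
    apply: (listing_bij (P := fun q => is_factorization phi q /\ is_iso q.2) (m := fun q => minv q.2)) (enum_ofP (fin_ISO dfin _)) _ _ _.
    - split; first by apply: NoDup_filter_seq; case: LF.
      move=> q; rewrite In_filter_seq isobP; split; case=> H1 H2; split => //.
      + by apply/(proj2 LF).
      + by apply/(proj2 LF).
    - move=> [a b] [[/= Hab E] Ib]; have [J1 J2 J3 J4] := invP C _ Ib.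
      split; last by apply: iso_inv.
      by rewrite -J1 -E cC.
    - move=> [a b] [a' b'] [[/= Hab E] Ib] [[/= Hab' E'] Ib'] /= Eb.
      have Ebb : b = b' by rewrite -(inv_inv C _ Ib) -(inv_inv C _ Ib') Eb.
      subst b'; congr (_, _); apply: (cancel_l C b) => //; congruence.
    - move=> f [Hf If]; exists (comp f phi, minv f); split => /=; last by rewrite inv_inv.
      have [J1 J2 J3 J4] := invP C _ If.
      split; last by apply: iso_inv.
      split => /=; first by rewrite cC; congruence.
      by rewrite compKl //; congruence.
  by rewrite -[_ *+ _]mulr_natr mulVr // unitN.
move=> [a b] /(proj2 LF) [/= Hab E] /=.
rewrite /isob; case: excluded_middle_informative => Ib.
  by rewrite epsbar_iso // (N_iso dfin Ib) -E cC.
by rewrite epsbar_niso.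
Qed.

End Counit.

Set Implicit Arguments. Unset Strict Implicit. Unset Printing Implicit Defensive.
Import GRing.Theory.
Local Open Scope ring_scope.

Section Counit2.
Variable C : category.
Hypothesis dfin : decomposition_finite C.
Variable R : comUnitRingType.
Hypothesis unitH : forall X : Obj C, ((ncard (Iso X) * ncard (Aut X))%N%:R : R) \is a GRing.unit.

Lemma Delta_cons (p : R * Mor C) s :
  Delta (p :: s) = [seq (p.1, q) | q <- factorizations p.2] ++ Delta s.
Proof. by []. Qed.

Lemma Csim_scale (r : R) (u : Mor C -> R) : Csim u -> Csim (fun x : Mor C => r * u x).
Proof. exact: span_scale. Qed.

Lemma single_l (r : R) (phi : Mor C) :
  Csim (fun x => fcoef (epsl [seq (r, q) | q <- factorizations phi]) x - r * dirac R phi x).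
Proof.
apply: (span_ext (u := fun x => r * \sum_(q <- factorizations phi)
                            (epsbar R q.1 * (dirac R q.2 x - dirac R phi x)))).
  move=> x; rewrite /epsl /fcoef !big_map /=.
  rewrite mulr_sumr -(mulr1 (r * dirac R phi x)) -(sum_eps_l dfin unitH phi) mulr_sumr -sumrB.
  by apply: eq_bigr => q _; ring.
apply: Csim_scale; apply: Csim_sum => [[a b]] /(proj2 (fact_listing dfin phi)) [/= Hab E].
have Ha : dom a = dom phi by rewrite -E dC.
have Hb : cod b = cod phi by rewrite -E cC.
case: (classic (is_iso a)) => Ia; last first.
  apply: (span_ext (u := fun _ => 0)); last by apply: span_0.
  by move=> x; rewrite epsbar_niso // mul0r.
apply: (span_ext (u := fun x => - epsbar R a * (dirac R phi x - dirac R b x))).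
  by move=> x; ring.
apply: Csim_scale; apply: Csim_diff.
apply: (simd_sim a (idm (cod phi))).
do 6 (split; rewrite ?dom_idm ?cod_idm ?dC ?cC; try (apply: iso_id); try congruence).
by rewrite comp_idl.
Qed.

Lemma single_r (r : R) (phi : Mor C) :
  Csim (fun x => fcoef (epsr [seq (r, q) | q <- factorizations phi]) x - r * dirac R phi x).
Proof.
apply: (span_ext (u := fun x => r * \sum_(q <- factorizations phi)
                            (epsbar R q.2 * (dirac R q.1 x - dirac R phi x)))).
  move=> x; rewrite /epsr /fcoef !big_map /=.
  rewrite mulr_sumr -(mulr1 (r * dirac R phi x)) -(sum_eps_r dfin unitH phi) mulr_sumr -sumrB.
  by apply: eq_bigr => q _; ring.
apply: Csim_scale; apply: Csim_sum => [[a b]] /(proj2 (fact_listing dfin phi)) [/= Hab E].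
have Ha : dom a = dom phi by rewrite -E dC.
have Hb : cod b = cod phi by rewrite -E cC.
case: (classic (is_iso b)) => Ib; last first.
  apply: (span_ext (u := fun _ => 0)); last by apply: span_0.
  by move=> x; rewrite epsbar_niso // mul0r.
apply: (span_ext (u := fun x => - epsbar R b * (dirac R phi x - dirac R a x))).
  by move=> x; ring.
apply: Csim_scale; apply: Csim_diff.
have [J1 J2 J3 J4] := invP C _ Ib.
apply: (simd_sim (idm (dom phi)) (minv b)).
do 6 (split; rewrite ?dom_idm ?cod_idm ?dC ?cC; try (apply: iso_id); try (apply: iso_inv => //); try congruence).
rewrite -E compKl // -{1}(comp_idr a); congruence.
Qed.

Lemma counit_l (s : seq (R * Mor C)) :
  Csim (fun x => fcoef (epsl (Delta s)) x - fcoef s x).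
Proof.
elim: s => [|[r phi] s IH].
  apply: (span_ext (u := fun _ => 0)); last by apply: span_0.
  by move=> x; rewrite /= /epsl /= fcoef_nil subrr.
rewrite Delta_cons /epsl map_cat -/(epsl _) -/(epsl _).
apply: (span_ext (u := fun x => (fcoef (epsl [seq (r, q) | q <- factorizations phi]) x
                    - r * dirac R phi x) + (fcoef (epsl (Delta s)) x - fcoef s x))).
  by move=> x; rewrite fcoef_cat fcoef_cons /=; ring.
by apply: span_add => //; apply: single_l.
Qed.

Lemma counit_r (s : seq (R * Mor C)) :
  Csim (fun x => fcoef (epsr (Delta s)) x - fcoef s x).
Proof.
elim: s => [|[r phi] s IH].
  apply: (span_ext (u := fun _ => 0)); last by apply: span_0.
  by move=> x; rewrite /= /epsr /= fcoef_nil subrr.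
rewrite Delta_cons /epsr map_cat -/(epsr _) -/(epsr _).
apply: (span_ext (u := fun x => (fcoef (epsr [seq (r, q) | q <- factorizations phi]) x
                    - r * dirac R phi x) + (fcoef (epsr (Delta s)) x - fcoef s x))).
  by move=> x; rewrite fcoef_cat fcoef_cons /=; ring.
by apply: span_add => //; apply: single_r.
Qed.

End Counit2.


Unset Implicit Arguments.
Theorem proposition4p6 (C : category) :
  decomposition_finite C ->
  (* Δ(C_sim) ⊆ B ⊗ C_sim + C_sim ⊗ B   (over Z) *)
  (forall s : seq (int * Mor C),
      Csim (fcoef s) -> K2 (fcoef (Delta s))) /\
  (* the descended coproduct on B / C_sim is coassociative *)
  (forall s : seq (int * Mor C),
      K3 (fun x => fcoef (Delta_l (Delta s)) x - fcoef (Delta_r (Delta s)) x)) /\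
  (* over R with |Iso(X)||Aut(X)| invertible, ε̄ is a two-sided counit *)
  (forall R : comUnitRingType,
      (forall X : Obj C, ((ncard (Iso X) * ncard (Aut X))%N%:R : R) \is a GRing.unit) ->
      forall s : seq (R * Mor C),
        Csim (fun x => fcoef (epsl (Delta s)) x - fcoef s x) /\
        Csim (fun x => fcoef (epsr (Delta s)) x - fcoef s x)).
Proof.
move=> dfin; split; [|split].
- by move=> s; apply: part1.
- move=> s; apply: (span_ext (u := fun _ => 0)); last by apply: span_0.
  by move=> x; rewrite coassoc.
- move=> R unitH s; split; [exact: counit_l|exact: counit_r].
Qed.
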